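(* If $L \subseteq a^*$ is a unary language, then $\mathbb{OGI}^*(L) = 2\mathbb{OC}^*(L)$.
   Context: Outfix-guided insertion: $x \leftarrow y = \{ x_1 u z v x_2 \mid x = x_1 u v x_2,\ y = u z v,\ u \neq \varepsilon,\ v \neq \varepsilon \}$, extended to languages by union over all pairs. $\mathbb{OGI}^{(0)}(L) = L$, $\mathbb{OGI}^{(i+1)}(L) = \mathbb{OGI}^{(i)}(L) \leftarrow \mathbb{OGI}^{(i)}(L)$, $\mathbb{OGI}^*(L) = \bigcup_{i\ge 0}\mathbb{OGI}^{(i)}(L)$. The 2-overlap catenation of strings is $x \,\overline{\odot}^2\, y = \{ uvw \mid x = uv,\ y = vw,\ u,w \in \Sigma^*,\ |v| \geq 2 \}$, extended to languages by union over all pairs. $2\mathbb{OC}^{(0)}(L) = L$, $2\mathbb{OC}^{(i+1)}(L) = 2\mathbb{OC}^{(i)}(L) \,\overline{\odot}^2\, 2\mathbb{OC}^{(i)}(L)$, and $2\mathbb{OC}^*(L) = \bigcup_{i \geq 0} 2\mathbb{OC}^{(i)}(L)$. *)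

(* Defs.v *)
From mathcomp Require Import all_boot.
Set Implicit Arguments. Unset Strict Implicit. Unset Printing Implicit Defensive.

Definition lang (T : Type) := seq T -> Prop.

Definition ogi_word (T : Type) (x y w : seq T) : Prop :=
  exists x1 u v x2 z,
    [/\ x = x1 ++ u ++ v ++ x2, y = u ++ z ++ v, u <> [::], v <> [::]
      & w = x1 ++ u ++ z ++ v ++ x2].

Definition ogi_lang (T : Type) (L1 L2 : lang T) : lang T :=
  fun w => exists x y, [/\ L1 x, L2 y & ogi_word x y w].

Fixpoint OGI_iter (T : Type) (L : lang T) (i : nat) : lang T :=
  match i with
  | 0 => L
  | i'.+1 => ogi_lang (OGI_iter L i') (OGI_iter L i')
  end.

Definition OGI_star (T : Type) (L : lang T) : lang T :=
  fun w => exists i, OGI_iter L i w.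

Definition oc2_word (T : Type) (x y w : seq T) : Prop :=
  exists u v w', [/\ x = u ++ v, y = v ++ w', 2 <= size v & w = u ++ v ++ w'].

Definition oc2_lang (T : Type) (L1 L2 : lang T) : lang T :=
  fun w => exists x y, [/\ L1 x, L2 y & oc2_word x y w].

Fixpoint OC2_iter (T : Type) (L : lang T) (i : nat) : lang T :=
  match i with
  | 0 => L
  | i'.+1 => oc2_lang (OC2_iter L i') (OC2_iter L i')
  end.

Definition OC2_star (T : Type) (L : lang T) : lang T :=
  fun w => exists i, OC2_iter L i w.

(* Main.v *)
Require Import Defs.
From mathcomp Require Import all_boot.
From mathcomp Require Import zify.

Section U.
Variables (T : eqType) (a : T).
Let p := fun c : T => c == a.

Lemma unaryE s : all p s -> s = nseq (size s) a.
Proof. elim: s => //= c s IH /andP[/eqP -> H]; by rewrite -IH. Qed.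

Lemma unary_eq s t : all p s -> all p t -> size s = size t -> s = t.
Proof. by move=> /unaryE -> /unaryE ->; rewrite !size_nseq => ->. Qed.

Lemma ogi_oc2 x y w : all p x -> all p y -> ogi_word x y w -> oc2_word x y w /\ all p w.
Proof.
move=> hx hy [x1 [u [v [x2 [z [ex ey hu hv ew]]]]]].
subst x y w.
rewrite !all_cat in hx hy; move: hx hy => /and4P[h1 h2 h3 h4] /and3P[h5 h6 h7].
split; last by rewrite ?all_cat h1 h2 h6 h3 h4.
exists (nseq (size x1 + size x2) a), (u ++ v), z; split.
- apply: unary_eq; first by rewrite !all_cat h1 h2 h3 h4.
  + by rewrite !all_cat h2 h3 all_nseq /p eqxx orbT.
  by rewrite !size_cat size_nseq; lia.
- apply: unary_eq; first by rewrite !all_cat h5 h6 h7.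
  + by rewrite !all_cat h5 h6 h7.
  by rewrite !size_cat; lia.
- case: u hu {h2 h5} => [//|c u] _; case: v hv {h3 h7} => [//|d v] _.
  rewrite /= !size_cat /=; lia.
- apply: unary_eq; first by rewrite !all_cat h1 h2 h6 h3 h4.
  + by rewrite !all_cat h2 h3 h6 all_nseq /p eqxx orbT.
  by rewrite !size_cat size_nseq; lia.
Qed.

Lemma oc2_ogi x y w : all p x -> all p y -> oc2_word x y w -> ogi_word x y w /\ all p w.
Proof.
move=> hx hy [u [v [w' [ex ey hv ew]]]].
subst x y w.
rewrite !all_cat in hx hy; move: hx hy => /andP[h1 h2] /andP[h3 h4].
split; last by rewrite ?all_cat h1 h2 h4.
case: v hv h2 h3 => [//|c [//|d v]] _ h2 h3.
exists u, [:: c], (d :: v), [::], w'; split => //.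
- by rewrite cats0.
- apply: unary_eq; first by rewrite all_cat h3 h4.
  + by rewrite !all_cat /=; move: h3 => /= /and3P[-> -> ->]; rewrite h4.
  by rewrite !size_cat /=; lia.
- apply: unary_eq; first by rewrite !all_cat h1 h2 h4.
  + by rewrite !all_cat /=; move: h2 => /= /and3P[-> -> ->]; rewrite h1 h4.
  by rewrite !size_cat /= ?size_cat /=; lia.
Qed.

Lemma iter_eq (L : lang T) (hunary : forall w, L w -> all p w) i :
  forall w, (OGI_iter L i w <-> OC2_iter L i w) /\ (OGI_iter L i w -> all p w).
Proof.
elim: i => [|i IH] w /=; first by split => //; apply: hunary.
have H1 : ogi_lang (OGI_iter L i) (OGI_iter L i) w ->
   oc2_lang (OC2_iter L i) (OC2_iter L i) w /\ all p w.
  move=> [x [y [hx hy hw]]].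
  have [e1 u1] := IH x; have [e2 u2] := IH y.
  have [h hw'] := ogi_oc2 _ _ _ (u1 hx) (u2 hy) hw.
  by split => //; exists x, y; split => //; [apply/e1 | apply/e2].
split; last by move=> /H1 [].
split; first by move=> /H1 [].
move=> [x [y [hx hy hw]]].
have [e1 u1] := IH x; have [e2 u2] := IH y.
have hx' : OGI_iter L i x by apply/e1.
have hy' : OGI_iter L i y by apply/e2.
have [h _] := oc2_ogi _ _ _ (u1 hx') (u2 hy') hw.
by exists x, y.
Qed.
End U.

Theorem corollary4p9 (T : eqType) (a : T) (L : lang T)
  (hunary : forall w, L w -> all (fun c => c == a) w) :
  forall w, OGI_star L w <-> OC2_star L w.
Proof.
move=> w; have E := fun i => proj1 (@iter_eq T a L hunary i w).
by split => -[i h]; exists i; apply/(E i).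
Qed.
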